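(* Let $q$ be a prime power, $k,m,n$ positive integers, and let $U$ be an $[n,k]_{q^m/q}$ system. Then $U$ is $(k-2,\,n-m-1)_q$-evasive if and only if $U$ is cutting.
   Context: An $[n,k]_{q^m/q}$ system is an $\mathbb F_q$-subspace $U$ of $\mathbb F_{q^m}^k$ with $\dim_{\mathbb F_q}(U)=n$ and $\langle U\rangle_{\mathbb F_{q^m}}=\mathbb F_{q^m}^k$. $U$ is $(h,r)_q$-evasive if $\dim_{\mathbb F_q}(U\cap H)\le r$ for every $\mathbb F_{q^m}$-subspace $H$ of $\mathbb F_{q^m}^k$ with $\dim_{\mathbb F_{q^m}}(H)=h$. $U$ is called cutting (a linear cutting blocking set) if for every $\mathbb F_{q^m}$-hyperplane $H$ of $\mathbb F_{q^m}^k$ one has $\langle H\cap U\rangle_{\mathbb F_{q^m}}=H$. *)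

(* Defs.v *)
From HB Require Import structures.
From mathcomp Require Import all_boot all_order all_algebra all_field.
Set Implicit Arguments. Unset Strict Implicit. Unset Printing Implicit Defensive.
Import GRing.Theory.
Local Open Scope ring_scope.

(* Setting: F = F_q a finite field, L = F_{q^m} a finite-dimensional field
   extension of F (so m = \dim {:L}).  The ambient space F_{q^m}^k is
   modelled as V := {ffun 'I_k -> L}, which is canonically an F-vector space
   (vectType F); F_q-subspaces of F_{q^m}^k are {vspace V}.
   F_{q^m}-subspaces of F_{q^m}^k are modelled as row spaces of matrices
   H : 'M[L]_k (their L-dimension is \rank H). *)

Section Systems.
Variables (F : finFieldType) (L : fieldExtType F) (k : nat).

Definition amb := {ffun 'I_k -> L}.

Definition rowv (v : amb) : 'rV[L]_k := \row_i v i.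

(* matrix over L whose rows are an F-basis of the F-subspace U;
   its row space is the L-span <U>_{F_{q^m}} *)
Definition spanL (U : {vspace amb}) : 'M[L]_(\dim U, k) :=
  \matrix_(i < \dim U) rowv (tnth (vbasis U) i).

(* the L-subspace (row space of H) seen as an F-subspace of amb:
   the kernel of the (linear) map v |-> rowv v *m cokermx H,
   i.e. the set of v with (rowv v <= H)%MS *)
Definition Lsub_map (H : 'M[L]_k) (v : amb) : amb :=
  [ffun i => (rowv v *m cokermx H) 0 i].

Definition vsL (H : 'M[L]_k) : {vspace amb} := lker (linfun (Lsub_map H)).

Definition is_system (n : nat) (U : {vspace amb}) : Prop :=
  \dim U = n /\ row_full (spanL U).

Definition evasive (U : {vspace amb}) (h r : int) : Prop :=
  forall H : 'M[L]_k, (\rank H)%:Z = h -> (\dim (U :&: vsL H)%VS)%:Z <= r.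

Definition cutting (U : {vspace amb}) : Prop :=
  forall H : 'M[L]_k, \rank H = k.-1 -> (spanL (U :&: vsL H)%VS == H)%MS.

End Systems.

(* Main.v *)
Require Import Defs.
From HB Require Import structures.
From mathcomp Require Import all_boot all_order all_algebra all_field.
From mathcomp Require Import zify.
Set Implicit Arguments. Unset Strict Implicit. Unset Printing Implicit Defensive.
Import GRing.Theory.
Local Open Scope ring_scope.

Section S.
Variables (F : finFieldType) (L : fieldExtType F) (k : nat).
Local Notation V := (amb L k).

Lemma rowvZ (a : F) (v : V) : rowv (a *: v) = a%:A *: rowv v.
Proof. by apply/rowP => i; rewrite !mxE ffunE mulr_algl. Qed.
Lemma rowvD (u v : V) : rowv (u + v) = rowv u + rowv v.
Proof. by apply/rowP => i; rewrite !mxE ffunE. Qed.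

Definition gmap r (M : 'M[L]_(k, r)) (v : V) : {ffun 'I_r -> L} :=
  [ffun i => (rowv v *m M) 0 i].
Lemma gmap_lin r (M : 'M[L]_(k, r)) : linear (gmap M).
Proof.
move=> a u v; apply/ffunP => i; rewrite !ffunE rowvD rowvZ mulmxDl -scalemxAl.
by rewrite !mxE mulr_algl.
Qed.
HB.instance Definition _ r M := GRing.isLinear.Build F V {ffun 'I_r -> L} _ (@gmap r M) (@gmap_lin r M).

Lemma gmap_eq0 r (M : 'M[L]_(k, r)) v : (gmap M v == 0) = (rowv v *m M == 0).
Proof.
apply/eqP/eqP => [h|h]; last by apply/ffunP=> i; rewrite !ffunE h mxE.
by apply/rowP=> i; move/ffunP: h => /(_ i); rewrite !ffunE !mxE.
Qed.

Lemma mem_vsL (H : 'M[L]_k) v : (v \in vsL H) = (rowv v <= H)%MS.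
Proof. by rewrite memv_ker (lfunE (gmap (cokermx H))) submxE gmap_eq0. Qed.
Local Opaque vsL.


Lemma rowv0 : rowv (0 : V) = 0.
Proof. by apply/rowP => i; rewrite !mxE ffunE. Qed.

Lemma mem_spanL (S : {vspace V}) v : v \in S -> (rowv v <= spanL S)%MS.
Proof.
move/coord_vbasis => ->; rewrite (big_morph (@rowv F L k) rowvD rowv0).
apply: summx_sub => i _; rewrite rowvZ; apply: scalemx_sub.
by rewrite -tnth_nth -(rowK (fun i => rowv (tnth (vbasis S) i))) row_sub.
Qed.

Lemma spanL_sub m (S : {vspace V}) (X : 'M[L]_(m, k)) :
  (forall v, v \in S -> (rowv v <= X)%MS) -> (spanL S <= X)%MS.
Proof.
move=> h; apply/row_subP => i; rewrite rowK; apply: h; exact: vbasis_mem (mem_tnth _ _).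
Qed.

Lemma colbasis (W : 'M[L]_k) r : (\rank W + r = k)%N ->
  exists B : 'M[L]_(k, r), (forall u : 'rV_k, (u <= W)%MS = (u *m B == 0)) /\
     (forall d : 'cV_r, (B *m d == 0) = (d == 0)).
Proof.
move=> hr; set C := cokermx W.
have rC : \rank C = r by rewrite mxrank_coker; lia.
have e1 := mulmx_base C; have e2 := row_base_free C; have e3 := col_base_full C.
have e0 : forall u : 'rV_k, (u <= W)%MS = (u *m C == 0) by move=> u; rewrite submxE.
move: (col_base C) (row_base C) e1 e2 e3; rewrite rC => cb rb e1 e2 e3.
exists cb; split.
  by move=> u; rewrite e0 -e1 mulmxA mulmx_free_eq0.
move=> d; have ft : row_free cb^T by rewrite /row_free mxrank_tr.
apply/eqP/eqP => [h|->]; last by rewrite mulmx0.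
have : d^T *m cb^T == 0 by rewrite -trmx_mul h trmx0.
by rewrite mulmx_free_eq0 // => /eqP /(congr1 trmx); rewrite trmxK trmx0.
Qed.

Lemma dimcap (U : {vspace V}) (H : 'M[L]_k) : \rank H = k.-1 -> (0 < k)%N ->
  (\dim U <= \dim (U :&: vsL H) + \dim {:L})%N.
Proof.
move=> rH k0; have [B [hB _]] := @colbasis H 1 ltac:(lia).
pose f := linfun (gmap B).
have ek : lker f = vsL H.
  by apply/vspaceP => v; rewrite memv_ker lfunE /= gmap_eq0 mem_vsL hB.
rewrite -(limg_ker_dim f U) ek leq_add2l.
apply: leq_trans (dimvS (subvf _)) _.
rewrite dimvf /dim /= card_ord mul1n; by rewrite dimvf.
Qed.


Lemma col_mul m n p j (A : 'M[L]_(m, n)) (B : 'M[L]_(n, p)) :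
  A *m col j B = col j (A *m B).
Proof. by rewrite !colE mulmxA. Qed.

Lemma midsub p (P : 'M[L]_(p, k)) (H : 'M[L]_k) : (P <= H)%MS -> ~~ (H <= P)%MS ->
  exists W : 'M[L]_k, [/\ \rank W = (\rank H).-1, (P <= W)%MS & (W <= H)%MS].
Proof.
move=> sPH nHP; set C := cokermx P.
have [j hj] : exists j, H *m col j C != 0.
  case: (pickP (fun j => H *m col j C != 0)) => [j hj|h]; first by exists j.
  exfalso; move: nHP; rewrite submxE; apply/negP/negPn/eqP/matrixP => i j.
  have /negbT/negPn/eqP/(congr1 (fun M : 'cV_k => M i 0)) := h j.
  by rewrite col_mul !mxE => ->.
set c := col j C; set K := kermx c.
have c0 : c != 0 by apply: contraNneq hj; rewrite -/c => ->; rewrite mulmx0.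
have rc : \rank c = 1%N.
  by have := rank_leq_col c; rewrite -mxrank_eq0 in c0; lia.
have rK : \rank K = k.-1 by rewrite mxrank_ker rc subn1.
have nHK : ~~ (H <= K)%MS by rewrite sub_kermx.
have H0 : \rank H != 0%N by rewrite mxrank_eq0; apply: contraNneq hj => ->; rewrite mul0mx.
have rHK : \rank (H + K)%MS = k.
  have h2 : ~~ (H + K <= K)%MS by rewrite addsmx_sub (negbTE nHK).
  have := ltmxErank K (H + K)%MS; rewrite ltmxE addsmxSr h2 /= => /esym h3.
  have := rank_leq_col (H + K)%MS; lia.
exists (H :&: K)%MS; split; last exact: capmxSl.
  have := mxrank_sum_cap H K; rewrite rHK rK; have := rank_leq_col H; move: H0; lia.
rewrite sub_capmx sPH /= sub_kermx /c col_mul mulmx_coker.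
by apply/eqP/matrixP => a b; rewrite !mxE.
Qed.

Lemma ev_cut (U : {vspace V}) m n : (0 < k)%N -> \dim {:L} = m -> \dim U = n ->
  evasive U (k%:Z - 2) (n%:Z - m%:Z - 1) -> cutting U.
Proof.
move=> k0 hm hn ev H rH.
have sPH : (spanL (U :&: vsL H)%VS <= H)%MS.
  by apply: spanL_sub => v; rewrite memv_cap mem_vsL => /andP[].
apply/andP; split => //; apply/negPn/negP => nHP.
have [W [rW sPW sWH]] := midsub sPH nHP.
have H0 : \rank H != 0%N.
  rewrite mxrank_eq0; apply: contraNneq nHP => ->; by rewrite sub0mx.
have eS : (U :&: vsL W)%VS = (U :&: vsL H)%VS.
  apply/vspaceP => v; apply/memv_capP/memv_capP => [[hu hw]|[hu hh]]; split.
  - exact: hu.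
  - by rewrite mem_vsL (submx_trans _ sWH) // -mem_vsL.
  - exact: hu.
  rewrite mem_vsL (submx_trans _ sPW) //; apply: mem_spanL.
  by apply/memv_capP.
have := ev W; rewrite eS => h.
have {h} h := h ltac:(rewrite rW rH; move: H0; rewrite rH; lia).
have := dimcap U rH k0; lia.
Qed.

Definition i0 : 'I_2 := ord0.
Definition i1 : 'I_2 := ord_max.
Definition key2 (p : 'rV[L]_2) : option L :=
  if p 0 i0 == 0 then None else Some (p 0 i1 / p 0 i0).
Definition dvec (t : option L) : 'cV[L]_2 :=
  \col_i (match t with Some a => if i == i0 then - a else 1
                  | None => if i == i0 then 1 else 0 end).

Lemma dvec_neq0 t : dvec t != 0.
Proof.
apply/eqP; case: t => [a|] /matrixP.
  by move/(_ i1 0); rewrite !mxE /= => /eqP; rewrite oner_eq0.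
by move/(_ i0 0); rewrite !mxE /= => /eqP; rewrite oner_eq0.
Qed.

Lemma mul_rc2 (p : 'rV[L]_2) (d : 'cV[L]_2) :
  (p *m d == 0) = (p 0 i0 * d i0 0 + p 0 i1 * d i1 0 == 0).
Proof.
have -> : (p *m d == 0) = ((p *m d) 0 0 == 0).
  apply/eqP/eqP => [->|h]; first by rewrite mxE.
  by apply/matrixP => a b; rewrite !ord1 h mxE.
rewrite mxE !big_ord_recl big_ord0 addr0.
by have -> : lift ord0 ord0 = i1 :> 'I_2 by apply: val_inj.
Qed.

Lemma key2P (p : 'rV[L]_2) t : p != 0 -> (p *m dvec t == 0) -> key2 p = t.
Proof.
move=> p0; rewrite mul_rc2 /key2 !mxE /=.
case: t => [a|] /=; rewrite ?eqxx /=.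
  case: (eqVneq (p 0 i0) 0) => [e|ne].
    rewrite e mul0r add0r mulr1 => /eqP e1; case/eqP: p0.
    apply/matrixP => x y; rewrite !ord1 mxE.
    by case: y => [[|[|y]] hy] //; [rewrite -e; congr (p 0 _); apply: val_inj | rewrite -e1; congr (p 0 _); apply: val_inj].
  rewrite mulr1 mulrN addrC subr_eq0 => /eqP ->; congr Some.
  by rewrite mulrC mulKf.
rewrite mulr1 mulr0 addr0 => /eqP ->; by rewrite eqxx.
Qed.

Lemma cardL : #|{: option (finvect_type L)}| = (#|F| ^ \dim {:L}).+1.
Proof.
rewrite card_option -(@card_vspacef F (finvect_type L) (Vector.class _)).
by rewrite card_vspace !dimvf.
Qed.

Lemma cardC (C : {vspace V}) : #|[set v : finvect_type V | v \in C]| = (#|F| ^ \dim C)%N.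
Proof.
by rewrite cardsE (card_vspace (C : {vspace finvect_type V})).
Qed.

Lemma cut_ev (U : {vspace V}) m n : \dim {:L} = m -> \dim U = n ->
  cutting U -> evasive U (k%:Z - 2) (n%:Z - m%:Z - 1).
Proof.
move=> hm hn cut W rW.
have k2 : (2 <= k)%N by have := rank_leq_col W; lia.
have rW' : \rank W = (k - 2)%N by lia.
case: (leqP n (\dim (U :&: vsL W) + m)) => hw; last by lia.
exfalso.
have [B [hB hBd]] := @colbasis W 2 ltac:(lia).
pose C := (U :\: vsL W)%VS.
have CW : (C :&: vsL W = 0)%VS by apply: capv_diff.
have dC : (\dim C <= m)%N.
  have e : (C :&: (U :&: vsL W) = 0)%VS.
    apply/eqP; rewrite -subv0 -CW; apply: capvS => //; exact: capvSr.
  have := dimv_disjoint_sum e; rewrite addv_diff_cap; lia.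
pose key (v : finvect_type V) : option (finvect_type L) := key2 (rowv v *m B).
pose Cs := [set v : finvect_type V | v \in C].
have [t ht] : exists t, t \notin key @: Cs.
  case: (pickP (fun t => t \notin key @: Cs)) => [t ht|hall]; first by exists t.
  have : (#|[set: option (finvect_type L)]| <= #|key @: Cs|)%N.
    by apply: subset_leq_card; apply/subsetP => x _; move/negbT: (hall x); rewrite negbK.
  rewrite cardsT cardL hm => h.
  have := leq_trans h (leq_imset_card _ _); rewrite cardC.
  have F0 : (0 < #|F|)%N by apply/card_gt0P; exists 0.
  have := leq_pexp2l F0 dC; lia.
pose Ht := kermx (B *m dvec t).
have Bd0 : B *m dvec t != 0 by rewrite hBd dvec_neq0.
have rHt : \rank Ht = k.-1.
  rewrite mxrank_ker; have := rank_leq_col (B *m dvec t).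
  rewrite -mxrank_eq0 in Bd0; lia.
have memHt : forall v, (v \in vsL Ht) = (rowv v *m B *m dvec t == 0).
  by move=> v; rewrite mem_vsL sub_kermx mulmxA.
have WHt : forall v, v \in vsL W -> v \in vsL Ht.
  move=> v hv; rewrite memHt; move: hv; rewrite mem_vsL hB => /eqP ->.
  by rewrite mul0mx.
have Cfree : forall c, c \in C -> c \in vsL Ht -> c = 0.
  move=> c cC cH; apply/eqP; apply: contraNT ht => c0.
  apply/imsetP; exists c; first by rewrite inE.
  have p0 : rowv c *m B != 0.
    apply: contra c0 => /eqP h0.
    have cW : c \in vsL W by rewrite mem_vsL hB h0.
    by rewrite -memv0 -CW; apply/memv_capP.
  by rewrite /key (key2P (t := t) p0) // -memHt.
have sub : forall v, v \in (U :&: vsL Ht)%VS -> (rowv v <= W)%MS.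
  move=> v /memv_capP [vU vH].
  move: vU vH; rewrite -{1}(addv_diff_cap U (vsL W)) => /memv_addP [c cC [w wUW ->]] vH.
  have wW : w \in vsL W by case/memv_capP: wUW.
  have c0 : c = 0.
    apply: (Cfree _ cC).
    rewrite -(addrK w c); apply: memvB; [exact: vH | exact: WHt].
  by rewrite c0 add0r -mem_vsL.
have := cut Ht rHt => /andP [_ sHP].
have := mxrankS (submx_trans sHP (spanL_sub sub)); lia.
Qed.
End S.

Theorem theorem3p3 (F : finFieldType) (L : fieldExtType F) (k m n : nat)
    (U : {vspace amb L k}) :
  (0 < k)%N -> (0 < m)%N -> (0 < n)%N ->
  \dim {:L} = m ->
  is_system n U ->
  (evasive U (k%:Z - 2) (n%:Z - m%:Z - 1) <-> cutting U).
Proof.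
move=> k0 m0 n0 hm [hn _]; split.
  exact: ev_cut k0 hm hn.
exact: cut_ev hm hn.
Qed.
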